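(* Let $I$ be an interval with $1\in I\subset\,]0,\infty[$. Let $\lambda,\mu,\tilde\mu\in C^1(I\times\mathbb{R})$ be $1$-periodic in $r$ with $\dot\lambda\in C^1(I\times\mathbb{R})$, and let $\psi\in C^1(\mathbb{R})$, $\overset{\circ}{\phi}\in C^2(\mathbb{R})$ be $1$-periodic; write $\overset{\circ}{\lambda}=\lambda(1,\cdot)$, $\overset{\circ}{\mu}=\mu(1,\cdot)$. Define $D^{\pm}=e^{-\mu}\partial_t\pm e^{-\lambda}\partial_r$ and $$\tilde a=\Big(-\dot\lambda-\frac1t\Big)e^{-\mu}-\tilde\mu e^{-\lambda},\quad b=-\frac{e^{-\mu}}{t},\quad \tilde c=\Big(-\dot\lambda-\frac1t\Big)e^{-\mu}+\tilde\mu e^{-\lambda},$$ $$b_1=\Big(-2\dot\lambda-\frac1t\Big)e^{-\mu}-(\tilde\mu+\mu')e^{-\lambda},\quad b_2=-\frac{e^{-\mu}}{t},\quad b_3=-\dot\lambda'e^{-\mu-\lambda}+(\lambda'\tilde\mu-\tilde\mu\mu'-\tilde\mu')e^{-2\lambda},$$ $$b_4=\Big(-2\dot\lambda-\frac1t\Big)e^{-\mu}+(\tilde\mu+\mu')e^{-\lambda},\quad b_5=-\dot\lambda'e^{-\mu-\lambda}-(\lambda'\tilde\mu-\tilde\mu\mu'-\tilde\mu')e^{-2\lambda}.$$ Let $X,Y\in C^1(I\times\mathbb{R})$ be $1$-periodic in $r$ and solve $D^+X=\tilde aX+bY$, $D^-Y=bX+\tilde cY$ with $X(1,r)=e^{-\overset{\circ}{\mu}(r)}\psi(r)-e^{-\overset{\circ}{\lambda}(r)}\overset{\circ}{\phi}'(r)$,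 $Y(1,r)=e^{-\overset{\circ}{\mu}(r)}\psi(r)+e^{-\overset{\circ}{\lambda}(r)}\overset{\circ}{\phi}'(r)$. Let $X_1,Y_1\in C^1(I\times\mathbb{R})$ be $1$-periodic in $r$ and solve $$D^+X_1=b_1X_1+b_2Y_1+b_3X,\qquad D^-Y_1=b_2X_1+b_4Y_1+b_5Y$$ with $X_1(1,\cdot)=e^{-\lambda(1,\cdot)}\partial_rX(1,\cdot)$ and $Y_1(1,\cdot)=e^{-\lambda(1,\cdot)}\partial_rY(1,\cdot)$. Set $K(t)=\sup_{r}(X^2+Y^2)^{1/2}(t,r)$ and $$A_0=2\sup_{r\in\mathbb{R}}\Big[(|\psi'|+|\overset{\circ}{\mu}'||\psi|)e^{-\overset{\circ}{\mu}-\overset{\circ}{\lambda}}+(|\overset{\circ}{\phi}''|+|\overset{\circ}{\lambda}'||\overset{\circ}{\phi}'|)e^{-2\overset{\circ}{\lambda}}\Big](r),\qquad A(t)=\sup_{r\in\mathbb{R}}\big(X_1^2+Y_1^2\big)^{1/2}(t,r),$$ $$v(t)=\sup_{r}\Big(\frac2t+2|\dot\lambda|+(|\tilde\mu|+|\mu'|)e^{\mu-\lambda}\Big)(t,r),\quad h(t)=\sup_r\Big[|\dot\lambda'|e^{-\lambda}+(|\mu'||\tilde\mu|+|\lambda'||\tilde\mu|+|\tilde\mu'|)e^{\mu-2\lambda}\Big](t,r).$$ Then for $t\in I$ with $t\le 1$, $$A(t)\le A_0+3\int_t^1\big(v(s)A(s)+h(s)K(s)\big)\,ds,$$ and for $t\in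 I$ with $t\ge1$ the same estimate holds with $\int_t^1$ replaced by $\int_1^t$.
   Context: A dot denotes $\partial_t$ and a prime denotes $\partial_r$. All functions of $(t,r)$ are periodic in $r$ with period 1. *)

(* Defs.v *)
From Stdlib Require Import Reals.
From Coquelicot Require Import Coquelicot.
Open Scope R_scope.

Definition is_interval (I : R -> Prop) : Prop :=
  forall a b c, I a -> I c -> a <= b -> b <= c -> I b.

Definition periodic2 (f : R -> R -> R) : Prop := forall t r, f t (r + 1) = f t r.
Definition periodic1 (f : R -> R) : Prop := forall r, f (r + 1) = f r.

Definition cont_on (I : R -> Prop) (g : R -> R -> R) : Prop :=
  forall t r, I t -> forall eps, 0 < eps -> exists delta, 0 < delta /\
    forall s q, I s -> Rabs (s - t) < delta -> Rabs (q - r) < delta ->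
      Rabs (g s q - g t r) < eps.

Definition pderiv_t (I : R -> Prop) (f ft : R -> R -> R) : Prop :=
  forall t r, I t -> forall eps, 0 < eps -> exists delta, 0 < delta /\
    forall s, I s -> s <> t -> Rabs (s - t) < delta ->
      Rabs ((f s r - f t r) / (s - t) - ft t r) < eps.

Definition pderiv_r (I : R -> Prop) (f fr : R -> R -> R) : Prop :=
  forall t r, I t -> derivable_pt_lim (fun q => f t q) r (fr t r).

(* f in C^1(I x R), with partial derivatives ft (= f dot) and fr (= f prime):
   f, ft, fr continuous on I x R and ft, fr are the partial derivatives. *)
Definition C1_on (I : R -> Prop) (f ft fr : R -> R -> R) : Prop :=
  cont_on I f /\ cont_on I ft /\ cont_on I fr /\ pderiv_t I f ft /\ pderiv_r I f fr.

Definition supR (g : R -> R) : R := real (Lub_Rbar (fun x => exists r, x = g r)).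

(* Main.v *)
Require Import Defs.
From Stdlib Require Import Reals.
From Coquelicot Require Import Coquelicot.
From Stdlib Require Import Lra Lia ZArith Classical ClassicalEpsilon.
Open Scope R_scope.


Lemma mult_cont_pt x y eps : 0 < eps -> exists d, 0 < d /\
  forall x' y', Rabs (x' - x) < d -> Rabs (y' - y) < d -> Rabs (x' * y' - x * y) < eps.
Proof.
  intros He.
  set (M := Rabs x + Rabs y + 2).
  assert (HM : 0 < M) by (unfold M; pose proof (Rabs_pos x); pose proof (Rabs_pos y); lra).
  exists (Rmin 1 (eps / M)). split.
  - apply Rmin_glb_lt; [lra| apply Rdiv_lt_0_compat; lra].
  - intros x' y' H1 H2.
    assert (Hd1 : Rmin 1 (eps/M) <= 1) by apply Rmin_l.
    assert (Hd2 : Rmin 1 (eps/M) <= eps/M) by apply Rmin_r.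
    set (d := Rmin 1 (eps/M)) in *.
    replace (x' * y' - x * y) with (x' * (y' - y) + y * (x' - x)) by ring.
    eapply Rle_lt_trans; [apply Rabs_triang|].
    rewrite !Rabs_mult.
    assert (Hx' : Rabs x' <= Rabs x + 1).
    { replace x' with (x + (x' - x)) by ring. eapply Rle_trans; [apply Rabs_triang|]. lra. }
    assert (Hdp : 0 < d) by (apply (Rle_lt_trans _ (Rabs (x'-x))); [apply Rabs_pos|lra]).
    assert (Rabs x' * Rabs (y' - y) <= (Rabs x + 1) * d).
    { apply Rmult_le_compat; try apply Rabs_pos; lra. }
    assert (Rabs y * Rabs (x' - x) <= Rabs y * d).
    { apply Rmult_le_compat_l; [apply Rabs_pos| lra]. }
    assert (Rabs y * Rabs (x' - x) < Rabs y * d \/ Rabs y = 0).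
    { destruct (Req_dec (Rabs y) 0); [right; auto| left; apply Rmult_lt_compat_l; [pose proof (Rabs_pos y); lra | lra]]. }
    assert ((Rabs x + 1) * d + Rabs y * d <= eps).
    { replace ((Rabs x + 1) * d + Rabs y * d) with ((Rabs x + Rabs y + 1) * d) by ring.
      apply (Rle_trans _ (M * (eps / M))).
      - apply Rmult_le_compat; try lra. pose proof (Rabs_pos x); pose proof (Rabs_pos y); lra.
        unfold M; lra.
      - right; field; lra. }
    assert (Rabs x' * Rabs (y' - y) < (Rabs x + 1) * d).
    { apply (Rle_lt_trans _ ((Rabs x + 1) * Rabs (y'-y))).
      apply Rmult_le_compat_r; [apply Rabs_pos| lra].
      apply Rmult_lt_compat_l; [pose proof (Rabs_pos x); lra| lra]. }
    lra.
Qed.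

Lemma cont_on_comp2 I (f : R -> R -> R) g1 g2 :
  (forall x y eps, 0 < eps -> exists d, 0 < d /\
     forall x' y', Rabs (x' - x) < d -> Rabs (y' - y) < d -> Rabs (f x' y' - f x y) < eps) ->
  cont_on I g1 -> cont_on I g2 -> cont_on I (fun t r => f (g1 t r) (g2 t r)).
Proof.
  intros Hf H1 H2 t r It eps He.
  destruct (Hf (g1 t r) (g2 t r) eps He) as [d [Hd Hd']].
  destruct (H1 t r It d Hd) as [d1 [Hd1 Hd1']].
  destruct (H2 t r It d Hd) as [d2 [Hd2 Hd2']].
  exists (Rmin d1 d2). split; [apply Rmin_glb_lt; auto|].
  intros s q Is Hs Hq. apply Hd'.
  - apply Hd1'; auto; eapply Rlt_le_trans; eauto; apply Rmin_l.
  - apply Hd2'; auto; eapply Rlt_le_trans; eauto; apply Rmin_r.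
Qed.

Lemma cont_on_mult I g1 g2 : cont_on I g1 -> cont_on I g2 -> cont_on I (fun t r => g1 t r * g2 t r).
Proof. intros; apply (cont_on_comp2 I Rmult); auto. intros; apply mult_cont_pt; auto. Qed.

Lemma cont_on_plus I g1 g2 : cont_on I g1 -> cont_on I g2 -> cont_on I (fun t r => g1 t r + g2 t r).
Proof.
  intros; apply (cont_on_comp2 I Rplus); auto.
  intros x y eps He. exists (eps/2). split; [lra|]. intros x' y' H1 H2.
  replace (x' + y' - (x + y)) with ((x' - x) + (y' - y)) by ring.
  eapply Rle_lt_trans; [apply Rabs_triang| lra].
Qed.

Lemma cont_on_const I c : cont_on I (fun _ _ => c).
Proof. intros t r It eps He. exists 1. split; [lra|]. intros. unfold Rminus; rewrite Rplus_opp_r, Rabs_R0; auto. Qed.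

Lemma cont_on_comp1 I (f : R -> R) g : continuity f -> cont_on I g -> cont_on I (fun t r => f (g t r)).
Proof.
  intros Hf Hg t r It eps He.
  destruct (Hf (g t r) eps He) as [d [Hd Hd']].
  destruct (Hg t r It d Hd) as [d1 [Hd1 Hd1']].
  exists d1. split; auto. intros s q Is Hs Hq.
  destruct (Req_dec (g s q) (g t r)) as [E|E].
  - rewrite E; unfold Rminus; rewrite Rplus_opp_r, Rabs_R0; auto.
  - apply Hd'. split; [split; [constructor| congruence]|]. simpl; unfold R_dist. apply Hd1'; auto.
Qed.

Lemma cont_on_t I (f : R -> R) : (forall t, I t -> continuity_pt f t) -> cont_on I (fun t _ => f t).
Proof.
  intros Hf t r It eps He.
  destruct (Hf t It eps He) as [d [Hd Hd']].
  exists d. split; auto. intros s q Is Hs Hq.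
  destruct (Req_dec s t) as [E|E].
  - rewrite E; unfold Rminus; rewrite Rplus_opp_r, Rabs_R0; auto.
  - apply Hd'. split; [split; [constructor| congruence]|]. simpl; unfold R_dist. auto.
Qed.

Lemma continuity_Rabs' : continuity Rabs.
Proof. intro x; apply Rcontinuity_abs. Qed.
Lemma continuity_exp' : continuity exp.
Proof. intro x; apply derivable_continuous_pt, derivable_pt_exp. Qed.
Lemma continuity_sqrt' : continuity sqrt.
Proof. intro x; apply continuity_pt_filterlim, continuous_sqrt. Qed.
Lemma continuity_sq : continuity (fun x => x ^ 2).
Proof. intro x. apply derivable_continuous_pt. apply derivable_pt_pow. Qed.
Lemma continuity_opp' : continuity (fun x => - x).
Proof. intro x. apply continuity_pt_opp, continuity_pt_id. Qed.

Lemma cont_on_minus I g1 g2 : cont_on I g1 -> cont_on I g2 -> cont_on I (fun t r => g1 t r - g2 t r).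
Proof.
  intros H1 H2. apply (cont_on_plus I g1 (fun t r => - g2 t r)); auto.
  apply (cont_on_comp1 I (fun x => - x) g2 continuity_opp' H2).
Qed.
Lemma cont_on_opp I g : cont_on I g -> cont_on I (fun t r => - g t r).
Proof. intros; apply (cont_on_comp1 I (fun x => - x) g continuity_opp'); auto. Qed.
Lemma cont_on_abs I g : cont_on I g -> cont_on I (fun t r => Rabs (g t r)).
Proof. intros; apply (cont_on_comp1 I Rabs g continuity_Rabs'); auto. Qed.
Lemma cont_on_exp I g : cont_on I g -> cont_on I (fun t r => exp (g t r)).
Proof. intros; apply (cont_on_comp1 I exp g continuity_exp'); auto. Qed.
Lemma cont_on_sqrt I g : cont_on I g -> cont_on I (fun t r => sqrt (g t r)).
Proof. intros; apply (cont_on_comp1 I sqrt g continuity_sqrt'); auto. Qed.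
Lemma cont_on_sq I g : cont_on I g -> cont_on I (fun t r => g t r ^ 2).
Proof. intros; apply (cont_on_comp1 I (fun x => x ^ 2) g continuity_sq); auto. Qed.
Lemma cont_on_divt I c : (forall t, I t -> 0 < t) -> cont_on I (fun t r => c / t).
Proof.
  intros Hp. apply (cont_on_t I (fun t => c / t)). intros t It.
  apply (continuity_pt_div (fct_cte c) id); [apply continuity_pt_const; intros ? ?; reflexivity| apply continuity_pt_id|].
  unfold id. specialize (Hp t It). lra.
Qed.

Definition periodicI (I : R -> Prop) (g : R -> R -> R) := forall t r, I t -> g t (r + 1) = g t r.

Lemma per_nat I g t r n : periodicI I g -> I t -> g t (r + INR n) = g t r.
Proof.
  intros Hp It. induction n.
  - simpl; rewrite Rplus_0_r; auto.
  - rewrite S_INR. replace (r + (INR n + 1)) with ((r + INR n) + 1) by ring.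
    rewrite Hp; auto.
Qed.

Lemma per_Z I g t r z : periodicI I g -> I t -> g t (r + IZR z) = g t r.
Proof.
  intros Hp It. destruct z as [|p|p].
  - simpl; rewrite Rplus_0_r; auto.
  - rewrite <- positive_nat_Z, <- INR_IZR_INZ. apply (per_nat I); auto.
  - rewrite <- Pos2Z.opp_pos, opp_IZR, <- positive_nat_Z, <- INR_IZR_INZ.
    set (n := Pos.to_nat p).
    rewrite <- (per_nat I g t (r + - INR n) n Hp It). f_equal; ring.
Qed.

Lemma per_reduce r : exists r0 z, 0 <= r0 <= 1 /\ r = r0 + IZR z.
Proof.
  destruct (base_Int_part r) as [H1 H2].
  exists (r - IZR (Int_part r)), (Int_part r). split; [lra| ring].
Qed.

Lemma per_red I g t r0 z : periodicI I g -> I t -> g t (r0 + IZR z) = g t r0.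
Proof. intros; apply (per_Z I); auto. Qed.

Lemma supR_prop f M : (forall r, f r <= M) ->
  (forall r, f r <= supR f) /\ supR f <= M.
Proof.
  intros HM. unfold supR.
  destruct (Lub_Rbar_correct (fun x => exists r, x = f r)) as [Hub Hlub].
  assert (H2 : Rbar_le (Lub_Rbar (fun x => exists r, x = f r)) M).
  { apply Hlub. intros x [r ->]. simpl. auto. }
  assert (H3 : Rbar_le (f 0) (Lub_Rbar (fun x => exists r, x = f r))).
  { apply Hub. exists 0; auto. }
  destruct (Lub_Rbar (fun x => exists r, x = f r)) as [l| |] eqn:E; simpl in *; try contradiction.
  split; auto. intros r. assert (H4 := Hub (f r) (ex_intro _ r eq_refl)). exact H4.
Qed.

Lemma supR_ge f M r : (forall r, f r <= M) -> f r <= supR f.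
Proof. intros H; apply (supR_prop f M H). Qed.
Lemma supR_le f M : (forall r, f r <= M) -> supR f <= M.
Proof. intros H; apply (supR_prop f M H). Qed.
Lemma supR_max f r0 : (forall r, f r <= f r0) -> supR f = f r0.
Proof.
  intros H. apply Rle_antisym. apply (supR_le f (f r0) H). apply (supR_ge f (f r0) r0 H).
Qed.

Lemma cont_on_pt I g s c : cont_on I g -> I s -> continuity_pt (g s) c.
Proof.
  intros Hc Is eps He. destruct (Hc s c Is eps He) as [d [Hd Hd']].
  exists d; split; auto. intros x [_ Hx]. simpl in *; unfold R_dist in *.
  apply Hd'; auto. unfold Rminus; rewrite Rplus_opp_r, Rabs_R0; auto.
Qed.

Lemma cont_attain I g s : cont_on I g -> periodicI I g -> I s ->
  exists r0, forall r, g s r <= g s r0.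
Proof.
  intros Hc Hp Is.
  destruct (continuity_ab_maj (g s) 0 1) as [M [HM HM']]; [lra| |].
  { intros c _; eapply cont_on_pt; eauto. }
  exists M. intros r. destruct (per_reduce r) as [r0 [z [Hr0 ->]]].
  rewrite (per_red I g s r0 z Hp Is). apply HM; auto.
Qed.

Lemma cont_bounded I g s : cont_on I g -> periodicI I g -> I s ->
  forall r, g s r <= supR (g s).
Proof.
  intros Hc Hp Is r. destruct (cont_attain I g s Hc Hp Is) as [r0 H].
  rewrite (supR_max _ r0 H); auto.
Qed.

Lemma cont_supR_eq I g s : cont_on I g -> periodicI I g -> I s ->
  exists r0, supR (g s) = g s r0 /\ forall r, g s r <= g s r0.
Proof.
  intros Hc Hp Is. destruct (cont_attain I g s Hc Hp Is) as [r0 H].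
  exists r0; split; auto. apply supR_max; auto.
Qed.

Lemma unif_r I g s eps : cont_on I g -> periodicI I g -> I s -> 0 < eps ->
  exists d, 0 < d /\ forall s', I s' -> Rabs (s' - s) < d -> forall r, Rabs (g s' r - g s r) < eps.
Proof.
  intros Hc Hp Is He.
  assert (Hx : forall x, {d : posreal | forall s' q, I s' -> Rabs (s' - s) < d -> Rabs (q - x) < d ->
                Rabs (g s' q - g s x) < eps / 2}).
  { intros x. destruct (constructive_indefinite_description _ (Hc s x Is (eps/2) ltac:(lra))) as [d [Hd Hd']].
    exists (mkposreal d Hd). simpl. auto. }
  set (delta := fun x => proj1_sig (Hx x)).
  destruct (compactness_value_1d 0 1 delta) as [d Hd].
  exists d. split; [apply cond_pos|].
  intros s' Is' Hs' r.
  destruct (per_reduce r) as [r0 [z [Hr0 ->]]].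
  rewrite (per_red I g s r0 z Hp Is), (per_red I g s' r0 z Hp Is').
  apply NNPP; intro Hn. apply (Hd r0 Hr0). intros [x [Hx0 [H1 H2]]]. apply Hn.
  assert (A1 : Rabs (g s' r0 - g s x) < eps / 2).
  { apply (proj2_sig (Hx x)); auto. fold (delta x). lra. }
  assert (A2 : Rabs (g s r0 - g s x) < eps / 2).
  { apply (proj2_sig (Hx x)); auto. unfold Rminus; rewrite Rplus_opp_r, Rabs_R0. apply cond_pos. }
  replace (g s' r0 - g s r0) with ((g s' r0 - g s x) - (g s r0 - g s x)) by ring.
  eapply Rle_lt_trans; [apply Rabs_triang|]. rewrite Rabs_Ropp. lra.
Qed.

Lemma sup_cont I g s eps : cont_on I g -> periodicI I g -> I s -> 0 < eps ->
  exists d, 0 < d /\ forall s', I s' -> Rabs (s' - s) < d ->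
    Rabs (supR (g s') - supR (g s)) < eps.
Proof.
  intros Hc Hp Is He.
  destruct (unif_r I g s (eps/2) Hc Hp Is ltac:(lra)) as [d [Hd Hd']].
  exists d; split; auto. intros s' Is' Hs'.
  destruct (cont_supR_eq I g s Hc Hp Is) as [r0 [E0 H0]].
  destruct (cont_supR_eq I g s' Hc Hp Is') as [r1 [E1 H1]].
  rewrite E0, E1.
  assert (A1 := Hd' s' Is' Hs' r0). assert (A2 := Hd' s' Is' Hs' r1).
  assert (B0 := H0 r1). assert (B1 := H1 r0).
  apply Rabs_def1; apply Rabs_def2 in A1; apply Rabs_def2 in A2; lra.
Qed.

Lemma deriv_max f x l : derivable_pt_lim f x l -> (forall y, f y <= f x) -> l = 0.
Proof.
  intros Hd Hm. destruct (Rtotal_order l 0) as [Hl|[Hl|Hl]]; auto.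
  - destruct (Hd (- l) ltac:(lra)) as [d Hd'].
    assert (Hdp := cond_pos d).
    specialize (Hd' (- (d/2)) ltac:(lra)).
    rewrite Rabs_Ropp, Rabs_pos_eq in Hd' by lra. specialize (Hd' ltac:(lra)).
    apply Rabs_def2 in Hd'. destruct Hd' as [H1 H2].
    set (q := (f (x + - (d / 2)) - f x) / - (d / 2)) in *.
    assert (E : f (x + - (d / 2)) - f x = q * (- (d/2))) by (unfold q; field; lra).
    assert (Hm' := Hm (x + - (d/2))). nra.
  - destruct (Hd l ltac:(lra)) as [d Hd'].
    assert (Hdp := cond_pos d).
    specialize (Hd' (d/2) ltac:(lra)).
    rewrite Rabs_pos_eq in Hd' by lra. specialize (Hd' ltac:(lra)).
    apply Rabs_def2 in Hd'. destruct Hd' as [H1 H2].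
    set (q := (f (x + d / 2) - f x) / (d / 2)) in *.
    assert (E : f (x + d / 2) - f x = q * (d/2)) by (unfold q; field; lra).
    assert (Hm' := Hm (x + d/2)). nra.
Qed.

Lemma deriv_absmax f x l : derivable_pt_lim f x l -> (forall y, Rabs (f y) <= Rabs (f x)) ->
  f x <> 0 -> l = 0.
Proof.
  intros Hd Hm Hn. destruct (Rtotal_order (f x) 0) as [H|[H|H]]; [|contradiction|].
  - apply derivable_pt_lim_opp in Hd.
    assert (- l = 0); [|lra].
    apply (deriv_max _ _ _ Hd). intros y. unfold opp_fct.
    specialize (Hm y). rewrite (Rabs_left (f x)) in Hm by lra.
    pose proof (Rabs_maj2 (f y)). lra.
  - apply (deriv_max _ _ _ Hd). intros y. specialize (Hm y).
    rewrite (Rabs_pos_eq (f x)) in Hm by lra. pose proof (Rabs_le (f y)).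
    pose proof (RRle_abs (f y)). lra.
Qed.

Lemma cpt_eps f c : continuity_pt f c -> forall eps, 0 < eps -> exists d, 0 < d /\
  forall s, Rabs (s - c) < d -> Rabs (f s - f c) < eps.
Proof.
  intros Hc eps He. destruct (Hc eps He) as [d [Hd Hd']]. exists d; split; auto.
  intros s Hs. destruct (Req_dec s c) as [->|E].
  - unfold Rminus; rewrite Rplus_opp_r, Rabs_R0; auto.
  - apply Hd'. split; [split; [constructor| congruence]| auto].
Qed.

Lemma FTC_lim G a c : continuity G -> derivable_pt_lim (fun y => RInt G a y) c (G c).
Proof.
  intros HG. apply is_derive_Reals.
  apply (is_derive_RInt G (fun y => RInt G a y) a c).
  - apply filter_forall. intros b0. apply (@RInt_correct R_CompleteNormedModule), (@ex_RInt_continuous R_CompleteNormedModule).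
    intros z _. apply continuity_pt_filterlim, HG.
  - apply continuity_pt_filterlim, HG.
Qed.

Lemma ex_RInt_cont G x y : continuity G -> ex_RInt G x y.
Proof. intros HG. apply (@ex_RInt_continuous R_CompleteNormedModule). intros z _. apply continuity_pt_filterlim, HG. Qed.

Lemma core_fwd I u ut ur G m a b :
  is_interval I -> I a -> I b -> a <= b ->
  cont_on I u -> periodicI I u -> pderiv_t I u ut -> pderiv_r I u ur ->
  continuity G -> (forall s, 0 <= G s) -> 0 <= m ->
  (forall s r, a <= s <= b -> ur s r = 0 -> Rabs (ut s r) <= G s) ->
  (forall r, Rabs (u a r) <= m) ->
  forall r, Rabs (u b r) <= m + RInt G a b.
Proof.
  intros HI Ia Ib Hab0 Hc Hp Ht Hr HG HG0 Hm HGb Hm0.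
  assert (Hab : forall s, a <= s <= b -> I s).
  { intros s Hs. apply (HI a s b); tauto. }
  set (ua := fun s r => Rabs (u s r)).
  assert (Hca : cont_on I ua) by (apply (cont_on_comp1 I Rabs u continuity_Rabs' Hc)).
  assert (Hpa : periodicI I ua) by (intros t r It; unfold ua; rewrite Hp; auto).
  assert (Hmain : forall eps, 0 < eps -> forall r, Rabs (u b r) < m + eps + eps * (b - a) + RInt G a b).
  { intros eps He.
    set (B := fun s => m + eps + eps * (s - a) + RInt G a s).
    assert (HBd : forall c, derivable_pt_lim B c (eps + G c)).
    { intros c e He'. destruct (FTC_lim G a c HG e He') as [d Hd]. exists d. intros h Hh Hh'.
      specialize (Hd h Hh Hh'). unfold B.
      replace ((m + eps + eps * (c + h - a) + RInt G a (c + h) - (m + eps + eps * (c - a) + RInt G a c)) / h - (eps + G c))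
        with ((RInt G a (c + h) - RInt G a c) / h - G c) by (field; auto). auto. }
    assert (HBc : forall c, continuity_pt B c).
    { intros c; apply derivable_continuous_pt; exists (eps + G c); apply HBd. }
    assert (HBpos : forall s, a <= s -> 0 < B s).
    { intros s Hs. unfold B. assert (0 <= RInt G a s).
      { apply RInt_ge_0; auto. apply ex_RInt_cont; auto. }
      assert (0 <= eps * (s - a)) by (apply Rmult_le_pos; lra). lra. }
    set (psi := fun s => supR (ua s) - B s).
    assert (Hpsic : forall s, I s -> forall e, 0 < e -> exists d, 0 < d /\
               forall s', I s' -> Rabs (s' - s) < d -> Rabs (psi s' - psi s) < e).
    { intros s Is e He'.
      destruct (sup_cont I ua s (e/2) Hca Hpa Is) as [d1 [Hd1 Hd1']]; [lra|].
      destruct (cpt_eps B s (HBc s) (e/2)) as [d2 [Hd2 Hd2']]; [lra|].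
      exists (Rmin d1 d2). split; [apply Rmin_glb_lt; auto|]. intros s' Is' Hs'.
      assert (A1 := Hd1' s' Is' (Rlt_le_trans _ _ _ Hs' (Rmin_l _ _))).
      assert (A2 := Hd2' s' (Rlt_le_trans _ _ _ Hs' (Rmin_r _ _))).
      unfold psi. apply Rabs_def2 in A1. apply Rabs_def2 in A2. apply Rabs_def1; lra. }
    assert (Hsup_le : forall s r, I s -> ua s r <= supR (ua s)).
    { intros; apply (cont_bounded I); auto. }
    assert (Hpsia : psi a < 0).
    { unfold psi, B. assert (E0 : RInt G a a = 0) by (exact (@RInt_point R_CompleteNormedModule a G)).
      assert (supR (ua a) <= m) by (apply (supR_le _ m); intros; apply Hm0).
      rewrite E0. replace (a - a) with 0 by ring. lra. }
    intros r. apply Rnot_le_lt. intros Hr0.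
    change (B b <= Rabs (u b r)) in Hr0.
    assert (Hpsib : 0 <= psi b).
    { unfold psi. specialize (Hsup_le b r Ib). unfold ua in *. lra. }
    set (E := fun x => a <= x <= b /\ forall y, a <= y <= x -> psi y < 0).
    assert (HEa : E a).
    { split; [lra|]. intros y Hy. replace y with a by lra. auto. }
    assert (HEb : bound E) by (exists b; intros x [Hx _]; lra).
    destruct (completeness E HEb (ex_intro _ a HEa)) as [c [Hub Hlub]].
    assert (Hac : a <= c) by (apply Hub; auto).
    assert (Hcb : c <= b) by (apply Hlub; intros x [Hx _]; lra).
    assert (H2 : forall y, a <= y < c -> psi y < 0).
    { intros y Hy. apply NNPP; intro Hn. assert (c <= y); [|lra]. apply Hlub.
      intros x [Hx Hx']. apply Rnot_lt_le; intro Hxy. apply Hn. apply Hx'. lra. }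
    assert (Hpc : 0 <= psi c).
    { apply Rnot_lt_le; intro Hneg.
      assert (Hcb' : c < b).
      { destruct (Req_dec c b) as [E'|E']; [rewrite E' in Hneg; lra| lra]. }
      destruct (Hpsic c (Hab c ltac:(lra)) (- psi c) ltac:(lra)) as [d [Hd Hd']].
      set (x := Rmin (c + d/2) b).
      assert (c < x) by (unfold x; apply Rmin_glb_lt; lra).
      assert (x <= b) by apply Rmin_r. assert (x <= c + d/2) by apply Rmin_l.
      assert (E x).
      { split; [lra|]. intros y Hy. destruct (Rlt_le_dec y c); [apply H2; lra|].
        assert (A := Hd' y (Hab y ltac:(lra)) ltac:(rewrite Rabs_pos_eq; lra)).
        apply Rabs_def2 in A; lra. }
      assert (x <= c) by (apply Hub; auto). lra. }
    assert (Hac' : a < c).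
    { destruct (Req_dec a c) as [E'|E']; [rewrite <- E' in Hpc; lra| lra]. }
    assert (Ic : I c) by (apply Hab; lra).
    destruct (cont_supR_eq I ua c Hca Hpa Ic) as [rs [Ers Hrs]].
    assert (Hbig : B c <= Rabs (u c rs)) by (unfold psi in Hpc; unfold ua in *; lra).
    assert (HBcpos : 0 < B c) by (apply HBpos; lra).
    assert (Hnz : u c rs <> 0) by (intro Z; rewrite Z, Rabs_R0 in Hbig; lra).
    assert (Hur : ur c rs = 0).
    { apply (deriv_absmax (fun q => u c q) rs); [apply Hr; auto| intros y; apply Hrs| auto]. }
    assert (Hut : Rabs (ut c rs) <= G c) by (apply HGb; auto; lra).
    assert (Hlt : forall y, a <= y < c -> Rabs (u y rs) < B y).
    { intros y Hy. assert (A := H2 y Hy). assert (A' := Hsup_le y rs (Hab y ltac:(lra))).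
      unfold psi, ua in *. lra. }
    assert (Hsg : exists sg, Rabs sg = 1 /\ sg * u c rs = Rabs (u c rs)).
    { destruct (Rle_or_lt 0 (u c rs)).
      - exists 1. rewrite Rabs_R1, Rabs_pos_eq; auto; lra.
      - exists (-1). split; [rewrite Rabs_left; lra| rewrite (Rabs_left (u c rs)); lra]. }
    destruct Hsg as [sg [Hsg1 Hsg2]].
    assert (Hsgx : forall x, sg * x <= Rabs x).
    { intros x. rewrite <- (Rmult_1_l (Rabs x)), <- Hsg1, <- Rabs_mult. apply RRle_abs. }
    destruct (Ht c rs Ic (eps/2)) as [d1 [Hd1 Hd1']]; [lra|].
    destruct (HBd c (eps/2)) as [d2 Hd2]; [lra|].
    assert (Hd2p := cond_pos d2).
    assert (Hmn : 0 < Rmin d1 d2) by (apply Rmin_glb_lt; auto).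
    assert (Hm1 := Rmin_l d1 d2). assert (Hm2 := Rmin_r d1 d2).
    set (y := Rmax a (c - Rmin d1 d2 / 2)).
    assert (Hy1 : a <= y) by apply Rmax_l.
    assert (Hy2 : c - Rmin d1 d2 / 2 <= y) by apply Rmax_r.
    assert (Hy3 : y < c) by (apply Rmax_lub_lt; lra).
    assert (Iy : I y) by (apply Hab; lra).
    assert (A1 := Hd1' y Iy ltac:(lra) ltac:(rewrite Rabs_left; lra)).
    assert (A2 := Hd2 (y - c) ltac:(lra) ltac:(rewrite Rabs_left; lra)).
    replace (c + (y - c)) with y in A2 by ring.
    set (qu := (u y rs - u c rs) / (y - c)) in *.
    set (qB := (B y - B c) / (y - c)) in *.
    assert (EN : (sg * u y rs - B y) - (sg * u c rs - B c) = (sg * qu - qB) * (y - c)).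
    { unfold qu, qB. field. lra. }
    assert (HN : (sg * u y rs - B y) - (sg * u c rs - B c) < 0).
    { assert (Hl := Hlt y ltac:(lra)). assert (Hs := Hsgx (u y rs)). lra. }
    assert (Hpos : 0 < sg * qu - qB) by nra.
    assert (A3 : Rabs (sg * qu - sg * ut c rs) < eps / 2).
    { replace (sg * qu - sg * ut c rs) with (sg * (qu - ut c rs)) by ring.
      rewrite Rabs_mult, Hsg1, Rmult_1_l. auto. }
    assert (Hs := Hsgx (ut c rs)).
    apply Rabs_def2 in A3. apply Rabs_def2 in A2. lra. }
  intros r. apply Rnot_lt_le; intro Hlt'.
  set (D := Rabs (u b r) - (m + RInt G a b)).
  assert (HD : 0 < D) by (unfold D; lra).
  set (eps := D / (2 * (1 + (b - a)))).
  assert (Heps : 0 < eps) by (unfold eps; apply Rdiv_lt_0_compat; lra).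
  specialize (Hmain eps Heps r).
  assert (eps + eps * (b - a) = D / 2) by (unfold eps; field; lra).
  unfold D in *. lra.
Qed.
Lemma RInt_refl G a b : continuity G -> RInt (fun s => G (- s)) (- a) (- b) = RInt G b a.
Proof.
  intros HG.
  assert (Hex : forall x y, ex_RInt G x y).
  { intros x y. apply (@ex_RInt_continuous R_CompleteNormedModule). intros z _. apply continuity_pt_filterlim, HG. }
  assert (H := @RInt_comp_lin R_CompleteNormedModule G (-1) 0 (- a) (- b)).
  replace (-1 * - a + 0) with a in H by ring.
  replace (-1 * - b + 0) with b in H by ring.
  specialize (H (Hex a b)).
  rewrite <- (opp_RInt_swap G a b (Hex a b)), <- H.
  assert (Hex2 : ex_RInt (fun s => G (- s)) (- a) (- b)).
  { apply (@ex_RInt_continuous R_CompleteNormedModule). intros z _.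
    apply continuity_pt_filterlim. apply continuity_pt_comp; [apply continuity_pt_opp, continuity_pt_id| apply HG]. }
  rewrite (RInt_ext (fun y => scal (-1) (G (-1*y+0))) (fun y => opp (G (-y)))).
  - assert (H2 := @RInt_opp R_CompleteNormedModule _ _ _ Hex2).
    transitivity (@opp (CompleteNormedModule.AbelianGroup R_AbsRing R_CompleteNormedModule) (@opp (CompleteNormedModule.AbelianGroup R_AbsRing R_CompleteNormedModule) (RInt (fun s => G (- s)) (- a) (- b)))).
    + rewrite opp_opp; reflexivity.
    + f_equal. symmetry. exact H2.
  - intros x _. unfold scal, opp; simpl. unfold mult; simpl.
    replace (-1 * x + 0) with (- x) by ring. ring.
Qed.

Lemma core_bwd I u ut ur G m a b :
  is_interval I -> I a -> I b -> b <= a ->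
  cont_on I u -> periodicI I u -> pderiv_t I u ut -> pderiv_r I u ur ->
  continuity G -> (forall s, 0 <= G s) -> 0 <= m ->
  (forall s r, b <= s <= a -> ur s r = 0 -> Rabs (ut s r) <= G s) ->
  (forall r, Rabs (u a r) <= m) ->
  forall r, Rabs (u b r) <= m + RInt G b a.
Proof.
  intros HI Ia Ib Hab0 Hc Hp Ht Hr HG HG0 Hm HGb Hm0 r.
  rewrite <- (RInt_refl G a b HG).
  assert (H := core_fwd (fun s => I (- s)) (fun s q => u (- s) q) (fun s q => - ut (- s) q)
     (fun s q => ur (- s) q) (fun s => G (- s)) m (- a) (- b)).
  replace (u b r) with (u (- - b) r) by (rewrite Ropp_involutive; auto). apply H; clear H.
  - intros x y z Hx Hz H1 H2. apply (HI (- z) (- y) (- x)); auto; lra.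
  - rewrite Ropp_involutive; auto.
  - rewrite Ropp_involutive; auto.
  - lra.
  - intros t q It eps He. destruct (Hc (- t) q It eps He) as [d [Hd Hd']].
    exists d; split; auto. intros s q' Is Hs Hq. apply Hd'; auto.
    replace (- s - - t) with (- (s - t)) by ring. rewrite Rabs_Ropp; auto.
  - intros t q It. apply Hp; auto.
  - intros t q It eps He. destruct (Ht (- t) q It eps He) as [d [Hd Hd']].
    exists d; split; auto. intros s Is Hst Hs.
    assert (A := Hd' (- s) Is ltac:(lra) ltac:(replace (- s - - t) with (- (s - t)) by ring; rewrite Rabs_Ropp; auto)).
    replace ((u (- s) q - u (- t) q) / (s - t) - - ut (- t) q)
      with (- ((u (- s) q - u (- t) q) / (- s - - t) - ut (- t) q)).
    + rewrite Rabs_Ropp; auto.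
    + field. repeat split; intro Z; apply Hst; lra.
  - intros t q It. apply Hr; auto.
  - intros x. apply continuity_pt_comp; [apply continuity_pt_opp, continuity_pt_id| apply HG].
  - intros; auto.
  - auto.
  - intros s q Hs Hq. rewrite Rabs_Ropp. apply HGb; auto. lra.
  - intros q. rewrite Ropp_involutive. auto.
Qed.

Lemma core_both I u ut ur G m t :
  is_interval I -> I 1 -> I t ->
  cont_on I u -> periodicI I u -> pderiv_t I u ut -> pderiv_r I u ur ->
  continuity G -> (forall s, 0 <= G s) -> 0 <= m ->
  (forall s r, Rmin 1 t <= s <= Rmax 1 t -> ur s r = 0 -> Rabs (ut s r) <= G s) ->
  (forall r, Rabs (u 1 r) <= m) ->
  forall r, Rabs (u t r) <= m + RInt G (Rmin 1 t) (Rmax 1 t).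
Proof.
  intros HI I1 It Hc Hp Ht Hr HG HG0 Hm HGb Hm0 r.
  destruct (Rle_dec 1 t) as [H|H].
  - rewrite Rmin_left, Rmax_right in * by lra.
    apply (core_fwd I u ut ur G m 1 t); auto.
  - rewrite Rmin_right, Rmax_left in * by lra.
    apply (core_bwd I u ut ur G m 1 t); auto; try lra.
Qed.

Lemma pderiv_r_per I f fr : periodicI I f -> pderiv_r I f fr -> periodicI I fr.
Proof.
  intros Hp Hr t r It. apply (uniqueness_limite (fun q => f t q) r); [| apply Hr; auto].
  intros eps He. destruct (Hr t (r + 1) It eps He) as [d Hd]. exists d. intros h Hh Hh'.
  specialize (Hd h Hh Hh'). replace (r + 1 + h) with ((r + h) + 1) in Hd by ring.
  rewrite !Hp in Hd; auto.
Qed.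

Lemma pderiv_t_per I f ft : periodicI I f -> pderiv_t I f ft ->
  (forall t, I t -> forall d, 0 < d -> exists s, I s /\ s <> t /\ Rabs (s - t) < d) ->
  periodicI I ft.
Proof.
  intros Hp Ht Hnd t r It. apply NNPP; intro Hne.
  set (e := Rabs (ft t (r + 1) - ft t r) / 2).
  assert (He : 0 < e).
  { unfold e. assert (0 < Rabs (ft t (r + 1) - ft t r)); [apply Rabs_pos_lt; intro Z; apply Hne; lra| lra]. }
  destruct (Ht t (r + 1) It e He) as [d1 [Hd1 Hd1']].
  destruct (Ht t r It e He) as [d2 [Hd2 Hd2']].
  destruct (Hnd t It (Rmin d1 d2) ltac:(apply Rmin_glb_lt; auto)) as [s [Is [Hst Hs]]].
  assert (A1 := Hd1' s Is Hst (Rlt_le_trans _ _ _ Hs (Rmin_l _ _))).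
  assert (A2 := Hd2' s Is Hst (Rlt_le_trans _ _ _ Hs (Rmin_r _ _))).
  rewrite !Hp in A1; auto.
  assert (Rabs (ft t (r + 1) - ft t r) < 2 * e).
  { replace (ft t (r + 1) - ft t r) with
      (- ((f s r - f t r) / (s - t) - ft t (r + 1)) + ((f s r - f t r) / (s - t) - ft t r)) by ring.
    eapply Rle_lt_trans; [apply Rabs_triang|]. rewrite Rabs_Ropp. lra. }
  unfold e in *. lra.
Qed.

Lemma deriv_per1 f f' : periodic1 f -> (forall r, derivable_pt_lim f r (f' r)) -> periodic1 f'.
Proof.
  intros Hp Hd r. apply (uniqueness_limite f r); [| apply Hd].
  intros eps He. destruct (Hd (r + 1) eps He) as [d Hd']. exists d. intros h Hh Hh'.
  specialize (Hd' h Hh Hh'). replace (r + 1 + h) with ((r + h) + 1) in Hd' by ring.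
  rewrite !Hp in Hd'; auto.
Qed.

Lemma cont_on_fix I J g t0 : cont_on I g -> I t0 -> cont_on J (fun _ r => g t0 r).
Proof.
  intros Hc It0 t r Jt eps He. destruct (Hc t0 r It0 eps He) as [d [Hd Hd']].
  exists d; split; auto. intros s q Js Hs Hq. apply Hd'; auto.
  unfold Rminus; rewrite Rplus_opp_r, Rabs_R0; auto.
Qed.

Lemma cont_on_r J f : continuity f -> cont_on J (fun _ r => f r).
Proof.
  intros Hf t r Jt eps He. destruct (cpt_eps f r (Hf r) eps He) as [d [Hd Hd']].
  exists d; split; auto.
Qed.

Lemma cpt_of_eps f x : (forall eps, 0 < eps -> exists d, 0 < d /\ forall y, Rabs (y - x) < d -> Rabs (f y - f x) < eps) ->
  continuity_pt f x.
Proof.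
  intros H eps He. destruct (H eps He) as [d [Hd Hd']]. exists d; split; auto.
  intros y [_ Hy]. simpl in *. unfold R_dist in *. auto.
Qed.

Definition clamp lo hi s := Rmax lo (Rmin hi s).

Lemma clamp_prop lo hi s : lo <= hi -> lo <= clamp lo hi s <= hi.
Proof. intros. unfold clamp, Rmax, Rmin. repeat destruct Rle_dec; lra. Qed.

Lemma clamp_id lo hi s : lo <= s <= hi -> clamp lo hi s = s.
Proof. intros. unfold clamp, Rmax, Rmin. repeat destruct Rle_dec; lra. Qed.

Lemma clamp_lip lo hi x y : lo <= hi -> Rabs (clamp lo hi y - clamp lo hi x) <= Rabs (y - x).
Proof.
  intros. unfold clamp, Rmax, Rmin. repeat destruct Rle_dec; unfold Rabs; repeat destruct Rcase_abs; lra.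
Qed.

Lemma clamp_cont I f lo hi : lo <= hi -> (forall s, lo <= s <= hi -> I s) ->
  cont_on I (fun t _ => f t) -> continuity (fun s => f (clamp lo hi s)).
Proof.
  intros Hlh HI Hc x. apply cpt_of_eps. intros eps He.
  assert (Hx := clamp_prop lo hi x Hlh).
  destruct (Hc (clamp lo hi x) 0 (HI _ Hx) eps He) as [d [Hd Hd']].
  exists d; split; auto. intros y Hy. apply (Hd' _ 0).
  - apply HI, clamp_prop; auto.
  - eapply Rle_lt_trans; [apply clamp_lip; auto| auto].
  - unfold Rminus; rewrite Rplus_opp_r, Rabs_R0; auto.
Qed.

Lemma sqrt2_bounds : 0 < sqrt 2 /\ sqrt 2 * sqrt 2 = 2 /\ sqrt 2 < 3/2.
Proof.
  assert (H1 : 0 < sqrt 2) by (apply sqrt_lt_R0; lra).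
  assert (H2 : sqrt 2 * sqrt 2 = 2) by (apply sqrt_sqrt; lra).
  split; auto. split; auto. nra.
Qed.

Lemma abs_le_sqrt x y : Rabs x <= sqrt (x ^ 2 + y ^ 2).
Proof.
  rewrite <- sqrt_Rsqr_abs. apply sqrt_le_1. apply Rle_0_sqr. nra. unfold Rsqr. nra.
Qed.

Lemma sum_le_sqrt x y : Rabs x + Rabs y <= sqrt 2 * sqrt (x ^ 2 + y ^ 2).
Proof.
  rewrite <- sqrt_mult by (lra || nra).
  assert (Hp : 0 <= Rabs x + Rabs y) by (pose proof (Rabs_pos x); pose proof (Rabs_pos y); lra).
  rewrite <- (sqrt_Rsqr (Rabs x + Rabs y)) by auto.
  apply sqrt_le_1. apply Rle_0_sqr. nra.
  unfold Rsqr. assert (Ex : Rabs x * Rabs x = x ^ 2) by (rewrite <- Rabs_mult; rewrite Rabs_pos_eq; [ring| nra]).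
  assert (Ey : Rabs y * Rabs y = y ^ 2) by (rewrite <- Rabs_mult; rewrite Rabs_pos_eq; [ring| nra]).
  assert (Hs := Rle_0_sqr (Rabs x - Rabs y)). unfold Rsqr in Hs. nra.
Qed.

Lemma sqrt_bound x y M : Rabs x <= M -> Rabs y <= M -> sqrt (x ^ 2 + y ^ 2) <= sqrt 2 * M.
Proof.
  intros Hx Hy. assert (HM : 0 <= M) by (pose proof (Rabs_pos x); lra).
  rewrite <- (sqrt_Rsqr M) by auto. rewrite <- sqrt_mult by (lra || apply Rle_0_sqr).
  apply sqrt_le_1. nra. apply Rmult_le_pos; [lra| apply Rle_0_sqr].
  unfold Rsqr.
  assert (x ^ 2 <= M * M).
  { replace (x ^ 2) with (Rabs x * Rabs x) by (rewrite <- Rabs_mult; rewrite Rabs_pos_eq; [ring| nra]).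
    apply Rmult_le_compat; auto; apply Rabs_pos. }
  assert (y ^ 2 <= M * M).
  { replace (y ^ 2) with (Rabs y * Rabs y) by (rewrite <- Rabs_mult; rewrite Rabs_pos_eq; [ring| nra]).
    apply Rmult_le_compat; auto; apply Rabs_pos. }
  lra.
Qed.

Lemma derivable_pt_lim_ext f g x l : (forall y, f y = g y) -> derivable_pt_lim f x l -> derivable_pt_lim g x l.
Proof.
  intros E H eps He. destruct (H eps He) as [d Hd]. exists d. intros h Hh Hh'.
  rewrite <- !E. auto.
Qed.

Lemma der_expneg_mul g g' f f' r : derivable_pt_lim g r g' -> derivable_pt_lim f r f' ->
  derivable_pt_lim (fun q => exp (- g q) * f q) r (- g' * exp (- g r) * f r + exp (- g r) * f').
Proof.
  intros Hg Hf.
  assert (H1 : derivable_pt_lim (fun q => exp (- g q)) r (exp (- g r) * (- g'))).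
  { apply (derivable_pt_lim_comp (fun q => - g q) exp r (- g') (exp (- g r))).
    apply (derivable_pt_lim_opp g r g' Hg). apply derivable_pt_lim_exp. }
  assert (H2 := derivable_pt_lim_mult _ _ r _ _ H1 Hf).
  replace (- g' * exp (- g r) * f r + exp (- g r) * f') with (exp (- g r) * - g' * f r + exp (- g r) * f') by ring.
  exact H2.
Qed.

Lemma bound_lemma P Q sg a b c d e f : 0 < P -> 0 < Q -> Rabs sg = 1 ->
  Rabs (P * (a - b * c) + sg * Q * (d - e * f)) <= P * (Rabs a + Rabs b * Rabs c) + Q * (Rabs d + Rabs e * Rabs f).
Proof.
  intros HP HQ Hs.
  eapply Rle_trans; [apply Rabs_triang|].
  rewrite !Rabs_mult, Hs, (Rabs_pos_eq P), (Rabs_pos_eq Q) by lra.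
  apply Rplus_le_compat; [apply Rmult_le_compat_l; [lra|] | rewrite Rmult_1_l; apply Rmult_le_compat_l; [lra|]];
  (eapply Rle_trans; [apply Rabs_triang|]); rewrite Rabs_Ropp, Rabs_mult; lra.
Qed.

Lemma cont_on_sup I g : cont_on I g -> periodicI I g -> cont_on I (fun s _ => supR (g s)).
Proof.
  intros Hc Hp s q Is eps He. destruct (sup_cont I g s eps Hc Hp Is He) as [d [Hd Hd']].
  exists d; split; auto.
Qed.

Lemma abs_tri3 a b c : Rabs (a + b + c) <= Rabs a + Rabs b + Rabs c.
Proof.
  eapply Rle_trans; [apply Rabs_triang|]. pose proof (Rabs_triang a b). lra.
Qed.

Lemma ptgen s LT LR LTR MU MR LA MT MTR ut w1 w2 w3 sg VE HE :
  0 < s -> Rabs sg = 1 ->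
  exp (- MU) * ut = ((- 2 * LT - / s) * exp (- MU) - sg * ((MT + MR) * exp (- LA))) * w1
     + (- exp (- MU) / s) * w2
     + (- LTR * exp (- MU - LA) + sg * ((LR * MT - MT * MR - MTR) * exp (- 2 * LA))) * w3 ->
  VE = 2 / s + 2 * Rabs LT + (Rabs MT + Rabs MR) * exp (MU - LA) ->
  HE = Rabs LTR * exp (- LA) + (Rabs MR * Rabs MT + Rabs LR * Rabs MT + Rabs MTR) * exp (MU - 2 * LA) ->
  Rabs ut <= VE * (Rabs w1 + Rabs w2) + HE * Rabs w3.
Proof.
  intros Hs Hsg E HV HH.
  set (c1 := - 2 * LT - / s - sg * ((MT + MR) * exp (MU - LA))).
  set (c2 := - / s).
  set (c3 := - LTR * exp (- LA) + sg * ((LR * MT - MT * MR - MTR) * exp (MU - 2 * LA))).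
  assert (Hem := exp_pos MU). assert (Hel := exp_pos LA).
  assert (Eq : ut = c1 * w1 + c2 * w2 + c3 * w3).
  { assert (e1 : exp (- MU) = / exp MU) by apply exp_Ropp.
    assert (e2 : exp (- LA) = / exp LA) by apply exp_Ropp.
    assert (e3 : exp (- MU - LA) = / exp MU * / exp LA).
    { unfold Rminus. rewrite exp_plus, !exp_Ropp. reflexivity. }
    assert (e4 : exp (- 2 * LA) = / exp LA * / exp LA).
    { replace (- 2 * LA) with (- LA + - LA) by ring. rewrite exp_plus, exp_Ropp. reflexivity. }
    assert (e5 : exp (MU - LA) = exp MU * / exp LA).
    { unfold Rminus. rewrite exp_plus, exp_Ropp. reflexivity. }
    assert (e6 : exp (MU - 2 * LA) = exp MU * / exp LA * / exp LA).
    { replace (MU - 2 * LA) with (MU + (- LA + - LA)) by ring. rewrite !exp_plus, exp_Ropp. ring. }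
    unfold c1, c2, c3. rewrite e5, e6, e2.
    rewrite e3, e4, e1, e2 in E.
    apply (Rmult_eq_reg_l (/ exp MU)); [| apply Rinv_neq_0_compat; lra].
    rewrite E. field. repeat split; lra. }
  assert (Hc1 : Rabs c1 <= VE).
  { unfold c1. rewrite HV.
    replace (- 2 * LT - / s - sg * ((MT + MR) * exp (MU - LA))) with
      (- (2 * LT) + (- / s) + (- (sg * ((MT + MR) * exp (MU - LA))))) by ring.
    eapply Rle_trans; [apply abs_tri3|].
    rewrite !Rabs_Ropp, !Rabs_mult, Hsg, (Rabs_pos_eq (exp _)) by (left; apply exp_pos).
    rewrite (Rabs_pos_eq (/ s)) by (left; apply Rinv_0_lt_compat; lra).
    assert (H1 : Rabs (MT + MR) <= Rabs MT + Rabs MR) by apply Rabs_triang.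
    assert (H2 := exp_pos (MU - LA)).
    assert (H3 : Rabs (MT + MR) * exp (MU - LA) <= (Rabs MT + Rabs MR) * exp (MU - LA)) by (apply Rmult_le_compat_r; lra).
    assert (H4 : Rabs 2 = 2) by (apply Rabs_pos_eq; lra).
    assert (H5 : / s <= 2 / s) by (unfold Rdiv; assert (0 < / s) by (apply Rinv_0_lt_compat; lra); lra).
    rewrite H4. lra. }
  assert (Hc2 : Rabs c2 <= VE).
  { unfold c2. rewrite HV. rewrite Rabs_Ropp, Rabs_pos_eq by (left; apply Rinv_0_lt_compat; lra).
    assert (0 < / s) by (apply Rinv_0_lt_compat; lra).
    assert (H5 : / s <= 2 / s) by (unfold Rdiv; lra).
    assert (0 <= 2 * Rabs LT) by (pose proof (Rabs_pos LT); lra).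
    assert (0 <= (Rabs MT + Rabs MR) * exp (MU - LA)).
    { apply Rmult_le_pos; [pose proof (Rabs_pos MT); pose proof (Rabs_pos MR); lra| left; apply exp_pos]. }
    lra. }
  assert (Hc3 : Rabs c3 <= HE).
  { unfold c3. rewrite HH. eapply Rle_trans; [apply Rabs_triang|].
    rewrite !Rabs_mult, Rabs_Ropp, Hsg, Rmult_1_l, !(Rabs_pos_eq (exp _)) by (left; apply exp_pos).
    apply Rplus_le_compat; [lra|]. apply Rmult_le_compat_r; [left; apply exp_pos|].
    replace (LR * MT - MT * MR - MTR) with (LR * MT + - (MT * MR) + - MTR) by ring.
    eapply Rle_trans; [apply abs_tri3|]. rewrite !Rabs_Ropp, !Rabs_mult. lra. }
  rewrite Eq. eapply Rle_trans; [apply abs_tri3|]. rewrite !Rabs_mult.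
  assert (A1 := Rmult_le_compat_r _ _ _ (Rabs_pos w1) Hc1).
  assert (A2 := Rmult_le_compat_r _ _ _ (Rabs_pos w2) Hc2).
  assert (A3 := Rmult_le_compat_r _ _ _ (Rabs_pos w3) Hc3).
  lra.
Qed.

Ltac cont_tac :=
  repeat first [ assumption
               | (apply cont_on_divt; assumption)
               | apply cont_on_plus | apply cont_on_minus | apply cont_on_mult
               | apply cont_on_opp | apply cont_on_abs | apply cont_on_exp
               | apply cont_on_sqrt | apply cont_on_sq
               | (apply cont_on_divt; assumption)
               | (eapply cont_on_fix; [eassumption| assumption])
               | (apply cont_on_r; assumption)
               | apply cont_on_const ].

Lemma per2I I f : periodic2 f -> periodicI I f.
Proof. intros H t r _; apply H. Qed.
Theorem proposition2p5
  (I : R -> Prop)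
  (lam lamt lamr lamtt lamtr mu mut mur mut_ mut_t mut_r : R -> R -> R)
  (psi dpsi phi dphi ddphi : R -> R)
  (X Xt Xr Y Yt Yr X1 X1t X1r Y1 Y1t Y1r : R -> R -> R) :
  is_interval I -> I 1 -> (forall t, I t -> 0 < t) ->
  (* lambda, mu, mu tilde in C^1(I x R), 1-periodic in r; lambda dot in C^1 *)
  C1_on I lam lamt lamr -> C1_on I lamt lamtt lamtr ->
  C1_on I mu mut mur -> C1_on I mut_ mut_t mut_r ->
  periodic2 lam -> periodic2 mu -> periodic2 mut_ ->
  (* psi in C^1(R), phi in C^2(R), 1-periodic *)
  (forall r, derivable_pt_lim psi r (dpsi r)) -> continuity dpsi ->
  (forall r, derivable_pt_lim phi r (dphi r)) ->
  (forall r, derivable_pt_lim dphi r (ddphi r)) -> continuity ddphi ->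
  periodic1 psi -> periodic1 phi ->
  (* X, Y *)
  C1_on I X Xt Xr -> C1_on I Y Yt Yr -> periodic2 X -> periodic2 Y ->
  (forall t r, I t ->
     exp (- mu t r) * Xt t r + exp (- lam t r) * Xr t r =
     ((- lamt t r - / t) * exp (- mu t r) - mut_ t r * exp (- lam t r)) * X t r
     + (- exp (- mu t r) / t) * Y t r) ->
  (forall t r, I t ->
     exp (- mu t r) * Yt t r - exp (- lam t r) * Yr t r =
     (- exp (- mu t r) / t) * X t r
     + ((- lamt t r - / t) * exp (- mu t r) + mut_ t r * exp (- lam t r)) * Y t r) ->
  (forall r, X 1 r = exp (- mu 1 r) * psi r - exp (- lam 1 r) * dphi r) ->
  (forall r, Y 1 r = exp (- mu 1 r) * psi r + exp (- lam 1 r) * dphi r) ->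
  (* X1, Y1 *)
  C1_on I X1 X1t X1r -> C1_on I Y1 Y1t Y1r -> periodic2 X1 -> periodic2 Y1 ->
  (forall t r, I t ->
     exp (- mu t r) * X1t t r + exp (- lam t r) * X1r t r =
     ((- 2 * lamt t r - / t) * exp (- mu t r)
        - (mut_ t r + mur t r) * exp (- lam t r)) * X1 t r
     + (- exp (- mu t r) / t) * Y1 t r
     + (- lamtr t r * exp (- mu t r - lam t r)
        + (lamr t r * mut_ t r - mut_ t r * mur t r - mut_r t r)
          * exp (- 2 * lam t r)) * X t r) ->
  (forall t r, I t ->
     exp (- mu t r) * Y1t t r - exp (- lam t r) * Y1r t r =
     (- exp (- mu t r) / t) * X1 t r
     + ((- 2 * lamt t r - / t) * exp (- mu t r)
        + (mut_ t r + mur t r) * exp (- lam t r)) * Y1 t r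
     + (- lamtr t r * exp (- mu t r - lam t r)
        - (lamr t r * mut_ t r - mut_ t r * mur t r - mut_r t r)
          * exp (- 2 * lam t r)) * Y t r) ->
  (forall r, X1 1 r = exp (- lam 1 r) * Xr 1 r) ->
  (forall r, Y1 1 r = exp (- lam 1 r) * Yr 1 r) ->
  let K := fun t => supR (fun r => sqrt (X t r ^ 2 + Y t r ^ 2)) in
  let A0 := 2 * supR (fun r =>
      (Rabs (dpsi r) + Rabs (mur 1 r) * Rabs (psi r)) * exp (- mu 1 r - lam 1 r)
      + (Rabs (ddphi r) + Rabs (lamr 1 r) * Rabs (dphi r)) * exp (- 2 * lam 1 r)) in
  let A := fun t => supR (fun r => sqrt (X1 t r ^ 2 + Y1 t r ^ 2)) in
  let v := fun t => supR (fun r =>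
      2 / t + 2 * Rabs (lamt t r)
      + (Rabs (mut_ t r) + Rabs (mur t r)) * exp (mu t r - lam t r)) in
  let h := fun t => supR (fun r =>
      Rabs (lamtr t r) * exp (- lam t r)
      + (Rabs (mur t r) * Rabs (mut_ t r) + Rabs (lamr t r) * Rabs (mut_ t r)
         + Rabs (mut_r t r)) * exp (mu t r - 2 * lam t r)) in
  (forall t, I t -> t <= 1 ->
     A t <= A0 + 3 * RInt (fun s => v s * A s + h s * K s) t 1) /\
  (forall t, I t -> 1 <= t ->
     A t <= A0 + 3 * RInt (fun s => v s * A s + h s * K s) 1 t).

Proof.
  intros HI I1 Hpos Clam Clamt Cmu Cmut Plam Pmu Pmut Dpsi Cdpsi Dphi Ddphi Cddphi Ppsi Pphi
    CX CY PX PY PDX PDY HX0 HY0 CX1 CY1 PX1 PY1 PDX1 PDY1 HX10 HY10 K A0 A v h.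
  destruct Clam as [Clam0 [Clam1 [Clam2 [Clam3 Clam4]]]].
  destruct Clamt as [Clamt0 [Clamt1 [Clamt2 [Clamt3 Clamt4]]]].
  destruct Cmu as [Cmu0 [Cmu1 [Cmu2 [Cmu3 Cmu4]]]].
  destruct Cmut as [Cmut0 [Cmut1 [Cmut2 [Cmut3 Cmut4]]]].
  destruct CX as [CX0 [CX1' [CX2 [CX3 CX4]]]].
  destruct CY as [CY0 [CY1' [CY2 [CY3 CY4]]]].
  destruct CX1 as [CX10 [CX11 [CX12 [CX13 CX14]]]].
  destruct CY1 as [CY10 [CY11 [CY12 [CY13 CY14]]]].
  apply (per2I I) in Plam, Pmu, Pmut, PX, PY, PX1, PY1.
  assert (Plamr := pderiv_r_per I lam lamr Plam Clam4).
  assert (Pmur := pderiv_r_per I mu mur Pmu Cmu4).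
  assert (Pmutr := pderiv_r_per I mut_ mut_r Pmut Cmut4).
  assert (Pdpsi := deriv_per1 psi dpsi Ppsi Dpsi).
  assert (Pdphi := deriv_per1 phi dphi Pphi Dphi).
  assert (Pddphi := deriv_per1 dphi ddphi Pdphi Ddphi).
  assert (Cpsi : continuity psi).
  { intro r; apply derivable_continuous_pt; exists (dpsi r); apply Dpsi. }
  assert (Cdphi : continuity dphi).
  { intro r; apply derivable_continuous_pt; exists (ddphi r); apply Ddphi. }
  set (S := fun r => (Rabs (dpsi r) + Rabs (mur 1 r) * Rabs (psi r)) * exp (- mu 1 r - lam 1 r)
      + (Rabs (ddphi r) + Rabs (lamr 1 r) * Rabs (dphi r)) * exp (- 2 * lam 1 r)).
  assert (CS : cont_on I (fun _ r => S r)) by (unfold S; cont_tac).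
  assert (PS : periodicI I (fun _ r => S r)).
  { intros t r _. unfold S. rewrite Pdpsi, Ppsi, Pddphi, Pdphi, Pmur, Plamr, Pmu, Plam; auto. }
  assert (HA0 : A0 = 2 * supR S) by reflexivity.
  assert (HSsup : forall r, S r <= supR S) by (intros r; apply (cont_bounded I (fun _ r => S r) 1 CS PS I1 r)).
  assert (HS0 : forall r, 0 <= S r).
  { intros r. unfold S. assert (H1 := exp_pos (- mu 1 r - lam 1 r)). assert (H2 := exp_pos (- 2 * lam 1 r)).
    assert (H3 := Rabs_pos (dpsi r)). assert (H4 := Rabs_pos (ddphi r)).
    assert (H5 := Rmult_le_pos _ _ (Rabs_pos (mur 1 r)) (Rabs_pos (psi r))).
    assert (H6 := Rmult_le_pos _ _ (Rabs_pos (lamr 1 r)) (Rabs_pos (dphi r))).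
    assert (0 <= (Rabs (dpsi r) + Rabs (mur 1 r) * Rabs (psi r)) * exp (- mu 1 r - lam 1 r)) by (apply Rmult_le_pos; lra).
    assert (0 <= (Rabs (ddphi r) + Rabs (lamr 1 r) * Rabs (dphi r)) * exp (- 2 * lam 1 r)) by (apply Rmult_le_pos; lra).
    lra. }
  assert (HA0pos : 0 <= A0) by (rewrite HA0; specialize (HSsup 0); specialize (HS0 0); lra).
  assert (Emul : forall r, exp (- mu 1 r - lam 1 r) = exp (- mu 1 r) * exp (- lam 1 r)).
  { intros r. unfold Rminus. apply exp_plus. }
  assert (E2l : forall r, exp (- 2 * lam 1 r) = exp (- lam 1 r) * exp (- lam 1 r)).
  { intros r. rewrite <- exp_plus. f_equal. ring. }
  assert (HXr : forall r, Xr 1 r = (- mur 1 r * exp (- mu 1 r) * psi r + exp (- mu 1 r) * dpsi r)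
            - (- lamr 1 r * exp (- lam 1 r) * dphi r + exp (- lam 1 r) * ddphi r)).
  { intros r. apply (uniqueness_limite (fun q => X 1 q) r); [apply CX4; auto|].
    apply (derivable_pt_lim_ext (fun q => exp (- mu 1 q) * psi q - exp (- lam 1 q) * dphi q)).
    { intros y; rewrite HX0; auto. }
    apply (derivable_pt_lim_minus (fun q => exp (- mu 1 q) * psi q) (fun q => exp (- lam 1 q) * dphi q)).
    - apply der_expneg_mul; [apply Cmu4; auto| apply Dpsi].
    - apply der_expneg_mul; [apply Clam4; auto| apply Ddphi]. }
  assert (HYr : forall r, Yr 1 r = (- mur 1 r * exp (- mu 1 r) * psi r + exp (- mu 1 r) * dpsi r)
            + (- lamr 1 r * exp (- lam 1 r) * dphi r + exp (- lam 1 r) * ddphi r)).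
  { intros r. apply (uniqueness_limite (fun q => Y 1 q) r); [apply CY4; auto|].
    apply (derivable_pt_lim_ext (fun q => exp (- mu 1 q) * psi q + exp (- lam 1 q) * dphi q)).
    { intros y; rewrite HY0; auto. }
    apply (derivable_pt_lim_plus (fun q => exp (- mu 1 q) * psi q) (fun q => exp (- lam 1 q) * dphi q)).
    - apply der_expneg_mul; [apply Cmu4; auto| apply Dpsi].
    - apply der_expneg_mul; [apply Clam4; auto| apply Ddphi]. }
  assert (HX1b : forall r, Rabs (X1 1 r) <= A0 / 2).
  { intros r. rewrite HX10, HXr.
    assert (B := bound_lemma (exp (- mu 1 r - lam 1 r)) (exp (- 2 * lam 1 r)) (-1)
       (dpsi r) (mur 1 r) (psi r) (ddphi r) (lamr 1 r) (dphi r) (exp_pos _) (exp_pos _)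
       ltac:(rewrite Rabs_left; lra)).
    rewrite Emul, E2l in B.
    replace (exp (- lam 1 r) * ((- mur 1 r * exp (- mu 1 r) * psi r + exp (- mu 1 r) * dpsi r)
            - (- lamr 1 r * exp (- lam 1 r) * dphi r + exp (- lam 1 r) * ddphi r)))
      with (exp (- mu 1 r) * exp (- lam 1 r) * (dpsi r - mur 1 r * psi r) +
            -1 * (exp (- lam 1 r) * exp (- lam 1 r)) * (ddphi r - lamr 1 r * dphi r)) by ring.
    assert (HSr := HSsup r). unfold S at 1 in HSr. rewrite Emul, E2l in HSr. rewrite HA0. lra. }
  assert (HY1b : forall r, Rabs (Y1 1 r) <= A0 / 2).
  { intros r. rewrite HY10, HYr.
    assert (B := bound_lemma (exp (- mu 1 r - lam 1 r)) (exp (- 2 * lam 1 r)) 1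
       (dpsi r) (mur 1 r) (psi r) (ddphi r) (lamr 1 r) (dphi r) (exp_pos _) (exp_pos _)
       ltac:(rewrite Rabs_R1; lra)).
    rewrite Emul, E2l in B.
    replace (exp (- lam 1 r) * ((- mur 1 r * exp (- mu 1 r) * psi r + exp (- mu 1 r) * dpsi r)
            + (- lamr 1 r * exp (- lam 1 r) * dphi r + exp (- lam 1 r) * ddphi r)))
      with (exp (- mu 1 r) * exp (- lam 1 r) * (dpsi r - mur 1 r * psi r) +
            1 * (exp (- lam 1 r) * exp (- lam 1 r)) * (ddphi r - lamr 1 r * dphi r)) by ring.
    assert (HSr := HSsup r). unfold S at 1 in HSr. rewrite Emul, E2l in HSr. rewrite HA0. lra. }
  destruct sqrt2_bounds as [Hs1 [Hs2 Hs3]].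
  assert (HAle : forall t M, (forall r, Rabs (X1 t r) <= M) -> (forall r, Rabs (Y1 t r) <= M) -> A t <= sqrt 2 * M).
  { intros t M H1 H2. unfold A. apply (supR_le _ (sqrt 2 * M)). intros r. apply sqrt_bound; auto. }
  assert (HA1 : A 1 <= A0).
  { assert (H := HAle 1 (A0 / 2) HX1b HY1b). nra. }
  assert (Hmain : forall t, I t -> t <> 1 ->
     A t <= A0 + 3 * RInt (fun s => v s * A s + h s * K s) (Rmin 1 t) (Rmax 1 t)).
  { intros t It Hne.
    set (lo := Rmin 1 t). set (hi := Rmax 1 t).
    assert (Hlohi : lo < hi) by (unfold lo, hi, Rmin, Rmax; destruct Rle_dec; lra).
    assert (Ilo : I lo) by (unfold lo, Rmin; destruct Rle_dec; auto).
    assert (Ihi : I hi) by (unfold hi, Rmax; destruct Rle_dec; auto).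
    assert (Hsub : forall s, lo <= s <= hi -> I s) by (intros s Hs; apply (HI lo s hi); tauto).
    assert (Hnd : forall s, I s -> forall d, 0 < d -> exists s', I s' /\ s' <> s /\ Rabs (s' - s) < d).
    { intros s Is d Hd.
      assert (Hm1 : 0 < Rmin (d/2) ((hi - lo)/2)) by (apply Rmin_glb_lt; lra).
      assert (Hm2 := Rmin_l (d/2) ((hi - lo)/2)). assert (Hm3 := Rmin_r (d/2) ((hi - lo)/2)).
      destruct (Rle_dec s ((lo + hi)/2)).
      - exists (s + Rmin (d/2) ((hi - lo)/2)). split; [|split; [lra|]].
        + apply (HI s _ hi); auto; lra.
        + rewrite Rabs_pos_eq; lra.
      - exists (s - Rmin (d/2) ((hi - lo)/2)). split; [|split; [lra|]].
        + apply (HI lo _ s); auto; lra.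
        + rewrite Rabs_left; lra. }
    assert (Plamt := pderiv_t_per I lam lamt Plam Clam3 Hnd).
    assert (Plamtr := pderiv_r_per I lamt lamtr Plamt Clamt4).
    set (vE := fun t r => 2 / t + 2 * Rabs (lamt t r) + (Rabs (mut_ t r) + Rabs (mur t r)) * exp (mu t r - lam t r)).
    set (hE := fun t r => Rabs (lamtr t r) * exp (- lam t r)
      + (Rabs (mur t r) * Rabs (mut_ t r) + Rabs (lamr t r) * Rabs (mut_ t r)
         + Rabs (mut_r t r)) * exp (mu t r - 2 * lam t r)).
    set (AE := fun t r => sqrt (X1 t r ^ 2 + Y1 t r ^ 2)).
    set (KE := fun t r => sqrt (X t r ^ 2 + Y t r ^ 2)).
    assert (CvE : cont_on I vE) by (unfold vE; cont_tac).
    assert (ChE : cont_on I hE) by (unfold hE; cont_tac).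
    assert (CAE : cont_on I AE) by (unfold AE; cont_tac).
    assert (CKE : cont_on I KE) by (unfold KE; cont_tac).
    assert (PvE : periodicI I vE).
    { intros s r Is. unfold vE. rewrite Plamt, Pmut, Pmur, Pmu, Plam; auto. }
    assert (PhE : periodicI I hE).
    { intros s r Is. unfold hE. rewrite Plamtr, Plam, Pmur, Pmut, Plamr, Pmutr, Pmu; auto. }
    assert (PAE : periodicI I AE).
    { intros s r Is. unfold AE. rewrite PX1, PY1; auto. }
    assert (PKE : periodicI I KE).
    { intros s r Is. unfold KE. rewrite PX, PY; auto. }
    assert (Hv : forall s, v s = supR (vE s)) by reflexivity.
    assert (Hh : forall s, h s = supR (hE s)) by reflexivity.
    assert (HAd : forall s, A s = supR (AE s)) by reflexivity.
    assert (HK : forall s, K s = supR (KE s)) by reflexivity.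
    assert (Bv : forall s r, I s -> vE s r <= v s) by (intros; rewrite Hv; apply (cont_bounded I); auto).
    assert (Bh : forall s r, I s -> hE s r <= h s) by (intros; rewrite Hh; apply (cont_bounded I); auto).
    assert (BA : forall s r, I s -> AE s r <= A s) by (intros; rewrite HAd; apply (cont_bounded I); auto).
    assert (BK : forall s r, I s -> KE s r <= K s) by (intros; rewrite HK; apply (cont_bounded I); auto).
    assert (Cv : cont_on I (fun s _ => v s)) by (apply (cont_on_sup I vE); auto).
    assert (Ch : cont_on I (fun s _ => h s)) by (apply (cont_on_sup I hE); auto).
    assert (CA : cont_on I (fun s _ => A s)) by (apply (cont_on_sup I AE); auto).
    assert (CK : cont_on I (fun s _ => K s)) by (apply (cont_on_sup I KE); auto).
    assert (Nv : forall s, I s -> 0 <= v s).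
    { intros s Is. assert (H := Bv s 0 Is). unfold vE in H.
      assert (0 < 2 / s) by (apply Rdiv_lt_0_compat; [lra| apply Hpos; auto]).
      assert (0 <= 2 * Rabs (lamt s 0)) by (pose proof (Rabs_pos (lamt s 0)); lra).
      assert (0 <= (Rabs (mut_ s 0) + Rabs (mur s 0)) * exp (mu s 0 - lam s 0)).
      { apply Rmult_le_pos; [pose proof (Rabs_pos (mut_ s 0)); pose proof (Rabs_pos (mur s 0)); lra| left; apply exp_pos]. }
      lra. }
    assert (Nh : forall s, I s -> 0 <= h s).
    { intros s Is. assert (H := Bh s 0 Is). unfold hE in H.
      assert (0 <= Rabs (lamtr s 0) * exp (- lam s 0)) by (apply Rmult_le_pos; [apply Rabs_pos| left; apply exp_pos]).
      assert (0 <= (Rabs (mur s 0) * Rabs (mut_ s 0) + Rabs (lamr s 0) * Rabs (mut_ s 0) + Rabs (mut_r s 0)) * exp (mu s 0 - 2 * lam s 0)).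
      { apply Rmult_le_pos; [| left; apply exp_pos].
        pose proof (Rmult_le_pos _ _ (Rabs_pos (mur s 0)) (Rabs_pos (mut_ s 0))).
        pose proof (Rmult_le_pos _ _ (Rabs_pos (lamr s 0)) (Rabs_pos (mut_ s 0))).
        pose proof (Rabs_pos (mut_r s 0)). lra. }
      lra. }
    assert (NA : forall s, I s -> 0 <= A s).
    { intros s Is. assert (H := BA s 0 Is). unfold AE in H. pose proof (sqrt_pos (X1 s 0 ^ 2 + Y1 s 0 ^ 2)). lra. }
    assert (NK : forall s, I s -> 0 <= K s).
    { intros s Is. assert (H := BK s 0 Is). unfold KE in H. pose proof (sqrt_pos (X s 0 ^ 2 + Y s 0 ^ 2)). lra. }
    set (G0 := fun s => sqrt 2 * v s * A s + h s * K s).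
    set (F0 := fun s => v s * A s + h s * K s).
    assert (CG0 : cont_on I (fun s _ => G0 s)) by (unfold G0; cont_tac).
    assert (CF0 : cont_on I (fun s _ => F0 s)) by (unfold F0; cont_tac).
    set (Gc := fun s => G0 (clamp lo hi s)).
    set (Fc := fun s => F0 (clamp lo hi s)).
    assert (CGc : continuity Gc) by (apply (clamp_cont I G0 lo hi); auto; lra).
    assert (CFc : continuity Fc) by (apply (clamp_cont I F0 lo hi); auto; lra).
    assert (NG0 : forall s, I s -> 0 <= G0 s).
    { intros s Is. unfold G0. pose proof (Nv s Is). pose proof (NA s Is). pose proof (Nh s Is). pose proof (NK s Is).
      assert (0 <= sqrt 2 * v s * A s) by (apply Rmult_le_pos; [apply Rmult_le_pos|]; lra).
      assert (0 <= h s * K s) by (apply Rmult_le_pos; lra). lra. }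
    assert (NGc : forall s, 0 <= Gc s).
    { intros s. unfold Gc. apply NG0, Hsub, clamp_prop. lra. }
    assert (Hpt : forall s r, lo <= s <= hi -> I s ->
       Rabs (X1 s r) + Rabs (Y1 s r) <= sqrt 2 * A s /\ Rabs (X s r) <= K s /\ Rabs (Y s r) <= K s).
    { intros s r Hs Is. split; [|split].
      - eapply Rle_trans; [apply sum_le_sqrt|]. apply Rmult_le_compat_l; [lra|]. apply (BA s r Is).
      - eapply Rle_trans; [apply abs_le_sqrt|]. apply (BK s r Is).
      - eapply Rle_trans; [|apply (BK s r Is)]. unfold KE. rewrite Rplus_comm. apply abs_le_sqrt. }
    assert (Hfin : forall s r w1 w2 w3 ut, lo <= s <= hi -> I s ->
       Rabs ut <= vE s r * (Rabs w1 + Rabs w2) + hE s r * Rabs w3 ->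
       Rabs w1 + Rabs w2 <= sqrt 2 * A s -> Rabs w3 <= K s -> Rabs ut <= Gc s).
    { intros s r w1 w2 w3 ut Hs Is H1 H2 H3. unfold Gc. rewrite clamp_id by auto. unfold G0.
      assert (V0 : 0 <= vE s r).
      { unfold vE. assert (0 < 2 / s) by (apply Rdiv_lt_0_compat; [lra| apply Hpos; auto]).
        assert (0 <= 2 * Rabs (lamt s r)) by (pose proof (Rabs_pos (lamt s r)); lra).
        assert (0 <= (Rabs (mut_ s r) + Rabs (mur s r)) * exp (mu s r - lam s r)).
        { apply Rmult_le_pos; [pose proof (Rabs_pos (mut_ s r)); pose proof (Rabs_pos (mur s r)); lra| left; apply exp_pos]. }
        lra. }
      assert (H0 : 0 <= hE s r).
      { unfold hE. assert (0 <= Rabs (lamtr s r) * exp (- lam s r)) by (apply Rmult_le_pos; [apply Rabs_pos| left; apply exp_pos]).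
        assert (0 <= (Rabs (mur s r) * Rabs (mut_ s r) + Rabs (lamr s r) * Rabs (mut_ s r) + Rabs (mut_r s r)) * exp (mu s r - 2 * lam s r)).
        { apply Rmult_le_pos; [| left; apply exp_pos].
          pose proof (Rmult_le_pos _ _ (Rabs_pos (mur s r)) (Rabs_pos (mut_ s r))).
          pose proof (Rmult_le_pos _ _ (Rabs_pos (lamr s r)) (Rabs_pos (mut_ s r))).
          pose proof (Rabs_pos (mut_r s r)). lra. }
        lra. }
      assert (P1 : vE s r * (Rabs w1 + Rabs w2) <= v s * (sqrt 2 * A s)).
      { apply Rmult_le_compat; auto. pose proof (Rabs_pos w1); pose proof (Rabs_pos w2); lra. }
      assert (P2 : hE s r * Rabs w3 <= h s * K s).
      { apply Rmult_le_compat; auto. apply Rabs_pos. }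
      lra. }
    assert (HGX : forall s r, Rmin 1 t <= s <= Rmax 1 t -> X1r s r = 0 -> Rabs (X1t s r) <= Gc s).
    { intros s r Hs H0. fold lo hi in Hs. assert (Is := Hsub s Hs).
      destruct (Hpt s r Hs Is) as [Q1 [Q2 Q3]].
      apply (Hfin s r (X1 s r) (Y1 s r) (X s r)); auto.
      apply (ptgen s (lamt s r) (lamr s r) (lamtr s r) (mu s r) (mur s r) (lam s r) (mut_ s r) (mut_r s r)
               (X1t s r) (X1 s r) (Y1 s r) (X s r) 1); auto.
      - rewrite Rabs_R1; auto.
      - assert (E := PDX1 s r Is). rewrite H0, Rmult_0_r, Rplus_0_r in E. rewrite E. ring. }
    assert (HGY : forall s r, Rmin 1 t <= s <= Rmax 1 t -> Y1r s r = 0 -> Rabs (Y1t s r) <= Gc s).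
    { intros s r Hs H0. fold lo hi in Hs. assert (Is := Hsub s Hs).
      destruct (Hpt s r Hs Is) as [Q1 [Q2 Q3]].
      apply (Hfin s r (Y1 s r) (X1 s r) (Y s r)); auto; [| lra].
      apply (ptgen s (lamt s r) (lamr s r) (lamtr s r) (mu s r) (mur s r) (lam s r) (mut_ s r) (mut_r s r)
               (Y1t s r) (Y1 s r) (X1 s r) (Y s r) (-1)); auto.
      - rewrite Rabs_left; lra.
      - assert (E := PDY1 s r Is). rewrite H0, Rmult_0_r, Rminus_0_r in E. rewrite E. ring. }
    assert (BX := core_both I X1 X1t X1r Gc (A0 / 2) t HI I1 It CX10 PX1 CX13 CX14 CGc NGc ltac:(lra) HGX HX1b).
    assert (BY := core_both I Y1 Y1t Y1r Gc (A0 / 2) t HI I1 It CY10 PY1 CY13 CY14 CGc NGc ltac:(lra) HGY HY1b).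
    fold lo hi in BX, BY.
    assert (HAt := HAle t _ BX BY).
    assert (ExG : ex_RInt Gc lo hi) by (apply ex_RInt_cont; auto).
    assert (ExF : ex_RInt Fc lo hi) by (apply ex_RInt_cont; auto).
    assert (EF : RInt F0 lo hi = RInt Fc lo hi).
    { apply RInt_ext. intros x Hx. rewrite Rmin_left, Rmax_right in Hx by lra.
      unfold Fc, F0. rewrite clamp_id; auto; lra. }
    rewrite EF.
    assert (Hle : RInt (fun s => sqrt 2 * Gc s) lo hi <= RInt (fun s => 3 * Fc s) lo hi).
    { apply RInt_le; [lra| | |].
      - apply ex_RInt_cont. intro x. apply continuity_pt_mult; [apply continuity_pt_const; intros ? ?; auto| apply CGc].
      - apply ex_RInt_cont. intro x. apply continuity_pt_mult; [apply continuity_pt_const; intros ? ?; auto| apply CFc].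
      - intros x Hx. unfold Gc, Fc, G0, F0. rewrite clamp_id by lra.
        assert (Ix : I x) by (apply Hsub; lra).
        pose proof (Nv x Ix). pose proof (NA x Ix). pose proof (Nh x Ix). pose proof (NK x Ix).
        assert (0 <= v x * A x) by (apply Rmult_le_pos; lra).
        assert (0 <= h x * K x) by (apply Rmult_le_pos; lra).
        replace (sqrt 2 * (sqrt 2 * v x * A x + h x * K x)) with (2 * (v x * A x) + sqrt 2 * (h x * K x))
          by (rewrite <- Hs2 at 1; ring).
        nra. }
    assert (E1 : RInt (fun s => sqrt 2 * Gc s) lo hi = sqrt 2 * RInt Gc lo hi).
    { exact (@RInt_scal R_CompleteNormedModule Gc lo hi (sqrt 2) ExG). }
    assert (E2 : RInt (fun s => 3 * Fc s) lo hi = 3 * RInt Fc lo hi).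
    { exact (@RInt_scal R_CompleteNormedModule Fc lo hi 3 ExF). }
    rewrite E1, E2 in Hle. nra. }
  split.
  - intros t It Ht. destruct (Req_dec t 1) as [->|Hne].
    + assert (E : RInt (fun s => v s * A s + h s * K s) 1 1 = 0)
        by (exact (@RInt_point R_CompleteNormedModule 1 (fun s => v s * A s + h s * K s))).
      rewrite E. lra.
    + assert (H := Hmain t It Hne). rewrite Rmin_right, Rmax_left in H by lra. auto.
  - intros t It Ht. destruct (Req_dec t 1) as [->|Hne].
    + assert (E : RInt (fun s => v s * A s + h s * K s) 1 1 = 0)
        by (exact (@RInt_point R_CompleteNormedModule 1 (fun s => v s * A s + h s * K s))).
      rewrite E. lra.
    + assert (H := Hmain t It Hne). rewrite Rmin_left, Rmax_right in H by lra. auto.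
Qed.
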